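(* Let an ILP with data $\mathcal D^p=\mathbf A^f\times\mathbf A^n\times\mathbf B^f\times\mathbf B^n\times\mathbf a\times\mathbf b\times\mathbf c^f\times\mathbf c^n$ be given. A point $x=(x^f,x^n)$ is a weakly optimal solution of the ILP if and only if $x$ is a weakly feasible solution of the ILP and there exists a sign vector $\sigma\in\{-1,1\}^k$ such that the following system (the testing system in orthant $\sigma$) in the unknowns $A'^f,A'^n,a',B'^f,B'^n,b',y^f\in\mathbb R^k,y^n\in\mathbb R^\ell$ is feasible: $$A'^f\in\operatorname{diag}(y^f)\mathbf A^f,\quad A'^n\in\operatorname{diag}(y^f)\mathbf A^n,\quad a'\in\operatorname{diag}(y^f)\mathbf a,$$ $$B'^f\in\operatorname{diag}(y^n)\mathbf B^f,\quad B'^n\in\operatorname{diag}(y^n)\mathbf B^n,\quad b'\in\operatorname{diag}(y^n)\mathbf b,$$ $$A'^fx^f+A'^nx^n=a',\qquad B'^fx^f+B'^nx^n=b',$$ $$(e^TA'^f+e^TB'^f)^T\in\mathbf c^f,$$ $$(e^TA'^n+e^TB'^n)_i\in\mathbf c^n_i\ \text{ for all } i \text{ with } x^n_i>0,\qquad (e^TA'^n+e^TB'^n)_i\le\overline c^n_i\ \text{ for all } i\text{ with } x^n_i=0,$$ $$y^n\ge 0,\qquad \operatorname{diag}(\sigma)y^f\ge 0.$$ (For fixed $x$ and $\sigma$ this is a linear system, since the sign of each component of $y^f$ and $y^n$ is fixed.) Moreover, if so, a scenario witnessing weak optimality of $x$ is $(A^f,A^n,B^f,B^n,a,b,c^f,c^n)$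 with $c^f=(e^TA'^f+e^TB'^f)^T$, where for each $i=1,\dots,k$: if $y^f_i\neq0$ then $(A^f_i,A^n_i,a_i)=\frac1{y^f_i}(A'^f_i,A'^n_i,a'_i)$, otherwise $(A^f_i,A^n_i,a_i)$ is any solution of $A^f_ix^f+A^n_ix^n=a_i$, $A^f_i\in\mathbf A^f_i$, $A^n_i\in\mathbf A^n_i$, $a_i\in\mathbf a_i$; for each $i=1,\dots,\ell$: if $y^n_i>0$ then $(B^f_i,B^n_i,b_i)=\frac1{y^n_i}(B'^f_i,B'^n_i,b'_i)$, otherwise $(B^f_i,B^n_i,b_i)$ is any solution of $B^f_ix^f+B^n_ix^n\ge b_i$, $B^f_i\in\mathbf B^f_i$, $B^n_i\in\mathbf B^n_i$, $b_i\in\mathbf b_i$; and for each $i=1,\dots,n$, $c^n_i=\overline c^n_i$ if $x^n_i=0$ and $c^n_i=(e^TA'^n+e^TB'^n)_i$ otherwise.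
   Context: Interval matrix: for real matrices $\underline A\le\overline A$ (entrywise) of the same size, $\mathbf A=[\underline A,\overline A]=\{A:\underline A\le A\le\overline A\}$; interval vectors are defined analogously, and $\mathbb{IR}^{p\times q}$ denotes the set of $p\times q$ interval matrices. Data of an interval linear program (ILP): interval matrices $\mathbf A^f\in\mathbb{IR}^{k\times m}$, $\mathbf A^n\in\mathbb{IR}^{k\times n}$, $\mathbf B^f\in\mathbb{IR}^{\ell\times m}$, $\mathbf B^n\in\mathbb{IR}^{\ell\times n}$ and interval vectors $\mathbf a\in\mathbb{IR}^k$, $\mathbf b\in\mathbb{IR}^\ell$, $\mathbf c^f\in\mathbb{IR}^m$, $\mathbf c^n\in\mathbb{IR}^n$; $\mathcal D^p$ is the Cartesian product of these sets, and an element $s=(A^f,A^n,B^f,B^n,a,b,c^f,c^n)\in\mathcal D^p$ is a scenario. To a scenario is associated the linear program $LP(s)$: minimize $(c^f)^Tx^f+(c^n)^Tx^n$ over $x^f\in\mathbb R^m$, $x^n\in\mathbb R^n$ subject to $A^fx^f+A^nx^n=a$, $B^fx^f+B^nx^n\ge b$, $x^n\ge 0$. Thus $k$ is the number of equality constraints and $\ell$ the number of inequality constraints. A point $x=(x^f,x^n)$ is a weakly optimal solution of the ILP if there exists a scenario $s\in\mathcal D^p$ such that $x$ is an optimal solution of $LP(s)$; it is a weakly feasible solution if there exists a scenario $s\in\mathcal D^p$ such that $x$ is a feasible solution of $LP(s)$. Further notation: $e$ is the all-ones vector of suitable dimension; $M_i$ denotes the $i$th row of a (possibly interval) matrix $M$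 and $v_i$ the $i$th entry of a vector; $\overline c^n$ is the upper endpoint vector of $\mathbf c^n=[\underline c^n,\overline c^n]$; for $y\in\mathbb R^p$ and an interval matrix or vector $\mathbf M$ with $p$ rows, $\operatorname{diag}(y)\mathbf M=\{\operatorname{diag}(y)M: M\in\mathbf M\}$, where $\operatorname{diag}(y)$ is the diagonal matrix with diagonal $y$. *)

(* Defs.v *)
From HB Require Import structures.
From mathcomp Require Import all_boot all_order all_algebra.
Set Implicit Arguments. Unset Strict Implicit. Unset Printing Implicit Defensive.
Import Order.TTheory GRing.Theory Num.Theory.
Local Open Scope ring_scope.

(* Interval matrix [lo, hi] with lo <= hi entrywise; interval vectors are
   interval matrices with one column. *)
Record imx (R : realFieldType) (p q : nat) := IMx {
  imlo : 'M[R]_(p, q);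
  imhi : 'M[R]_(p, q);
  imlo_le_hi : forall i j, imlo i j <= imhi i j }.

Definition imem (R : realFieldType) p q (M : imx R p q) (A : 'M[R]_(p, q)) : Prop :=
  forall i j, imlo M i j <= A i j <= imhi M i j.

Definition in_diag_imx (R : realFieldType) p q (y : 'cV[R]_p) (M : imx R p q)
  (A' : 'M[R]_(p, q)) : Prop :=
  exists A, imem M A /\ A' = diag_mx y^T *m A.

Definition mx_le (R : realFieldType) p q (A B : 'M[R]_(p, q)) : Prop :=
  forall i j, A i j <= B i j.

Record ILP (R : realFieldType) (k l m n : nat) := MkILP {
  IAf : imx R k m; IAn : imx R k n; IBf : imx R l m; IBn : imx R l n;
  Ia : imx R k 1; Ib : imx R l 1; Icf : imx R m 1; Icn : imx R n 1 }.

Record scen (R : realFieldType) (k l m n : nat) := MkScen {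
  sAf : 'M[R]_(k, m); sAn : 'M[R]_(k, n); sBf : 'M[R]_(l, m); sBn : 'M[R]_(l, n);
  sa : 'cV[R]_k; sb : 'cV[R]_l; scf : 'cV[R]_m; scn : 'cV[R]_n }.

Definition in_Dp (R : realFieldType) k l m n (P : ILP R k l m n) (s : scen R k l m n) : Prop :=
  imem (IAf P) (sAf s) /\ imem (IAn P) (sAn s) /\ imem (IBf P) (sBf s) /\
  imem (IBn P) (sBn s) /\ imem (Ia P) (sa s) /\ imem (Ib P) (sb s) /\
  imem (Icf P) (scf s) /\ imem (Icn P) (scn s).

Definition lp_feasible (R : realFieldType) k l m n (s : scen R k l m n)
  (xf : 'cV[R]_m) (xn : 'cV[R]_n) : Prop :=
  [/\ sAf s *m xf + sAn s *m xn = sa s,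
      mx_le (sb s) (sBf s *m xf + sBn s *m xn) & mx_le 0 xn].

Definition lp_obj (R : realFieldType) k l m n (s : scen R k l m n)
  (xf : 'cV[R]_m) (xn : 'cV[R]_n) : R :=
  ((scf s)^T *m xf + (scn s)^T *m xn) 0 0.

Definition lp_optimal (R : realFieldType) k l m n (s : scen R k l m n)
  (xf : 'cV[R]_m) (xn : 'cV[R]_n) : Prop :=
  lp_feasible s xf xn /\
  forall xf' xn', lp_feasible s xf' xn' -> lp_obj s xf xn <= lp_obj s xf' xn'.

Definition weakly_optimal (R : realFieldType) k l m n (P : ILP R k l m n)
  (xf : 'cV[R]_m) (xn : 'cV[R]_n) : Prop :=
  exists s, in_Dp P s /\ lp_optimal s xf xn.

Definition weakly_feasible (R : realFieldType) k l m n (P : ILP R k l m n)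
  (xf : 'cV[R]_m) (xn : 'cV[R]_n) : Prop :=
  exists s, in_Dp P s /\ lp_feasible s xf xn.

Definition sign_vec (R : realFieldType) k (sigma : 'cV[R]_k) : Prop :=
  forall i, sigma i 0 = 1 \/ sigma i 0 = -1.

Definition eT (R : realFieldType) p q (M : 'M[R]_(p, q)) : 'rV[R]_q :=
  const_mx 1 *m M.

Definition testing_system (R : realFieldType) k l m n (P : ILP R k l m n)
  (xf : 'cV[R]_m) (xn : 'cV[R]_n) (sigma : 'cV[R]_k)
  (Af' : 'M[R]_(k, m)) (An' : 'M[R]_(k, n)) (a' : 'cV[R]_k)
  (Bf' : 'M[R]_(l, m)) (Bn' : 'M[R]_(l, n)) (b' : 'cV[R]_l)
  (yf : 'cV[R]_k) (yn : 'cV[R]_l) : Prop :=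
  [/\ in_diag_imx yf (IAf P) Af', in_diag_imx yf (IAn P) An' & in_diag_imx yf (Ia P) a'] /\
  [/\ in_diag_imx yn (IBf P) Bf', in_diag_imx yn (IBn P) Bn' & in_diag_imx yn (Ib P) b'] /\
  Af' *m xf + An' *m xn = a' /\ Bf' *m xf + Bn' *m xn = b' /\
   [/\ imem (Icf P) (eT Af' + eT Bf')^T,
       forall i, 0 < xn i 0 ->
         imlo (Icn P) i 0 <= (eT An' + eT Bn') 0 i <= imhi (Icn P) i 0,
       forall i, xn i 0 = 0 -> (eT An' + eT Bn') 0 i <= imhi (Icn P) i 0,
       mx_le 0 yn & mx_le 0 (diag_mx sigma^T *m yf)].

Definition witness_scen (R : realFieldType) k l m n (P : ILP R k l m n)
  (xf : 'cV[R]_m) (xn : 'cV[R]_n)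
  (Af' : 'M[R]_(k, m)) (An' : 'M[R]_(k, n)) (a' : 'cV[R]_k)
  (Bf' : 'M[R]_(l, m)) (Bn' : 'M[R]_(l, n)) (b' : 'cV[R]_l)
  (yf : 'cV[R]_k) (yn : 'cV[R]_l) (s : scen R k l m n) : Prop :=
  [/\ scf s = (eT Af' + eT Bf')^T,
      (forall i : 'I_k,
         if yf i 0 != 0 then
           [/\ row i (sAf s) = (yf i 0)^-1 *: row i Af',
               row i (sAn s) = (yf i 0)^-1 *: row i An' &
               sa s i 0 = (yf i 0)^-1 * a' i 0]
         else
           [/\ row i (sAf s) *m xf + row i (sAn s) *m xn = row i (sa s),
               (forall j, imlo (IAf P) i j <= sAf s i j <= imhi (IAf P) i j),
               (forall j, imlo (IAn P) i j <= sAn s i j <= imhi (IAn P) i j) &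
               imlo (Ia P) i 0 <= sa s i 0 <= imhi (Ia P) i 0]),
      (forall i : 'I_l,
         if 0 < yn i 0 then
           [/\ row i (sBf s) = (yn i 0)^-1 *: row i Bf',
               row i (sBn s) = (yn i 0)^-1 *: row i Bn' &
               sb s i 0 = (yn i 0)^-1 * b' i 0]
         else
           [/\ sb s i 0 <= (row i (sBf s) *m xf + row i (sBn s) *m xn) 0 0,
               (forall j, imlo (IBf P) i j <= sBf s i j <= imhi (IBf P) i j),
               (forall j, imlo (IBn P) i j <= sBn s i j <= imhi (IBn P) i j) &
               imlo (Ib P) i 0 <= sb s i 0 <= imhi (Ib P) i 0]) &
      (forall i : 'I_n,
         scn s i 0 = if xn i 0 == 0 then imhi (Icn P) i 0
                     else (eT An' + eT Bn') 0 i)].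

(* Main.v *)
Require Import Defs.
From HB Require Import structures.
From mathcomp Require Import all_boot all_order all_algebra.
From mathcomp Require Import ring.
From Stdlib Require Import Classical_Prop.
Import Order.TTheory GRing.Theory Num.Theory.
Local Open Scope ring_scope.
Set Implicit Arguments. Unset Strict Implicit. Unset Printing Implicit Defensive.
Definition linF (R : realFieldType) (V : Type) (addV : V -> V -> V) (scaleV : R -> V -> V) (f : V -> R) :=
  (forall a x, f (scaleV a x) = a * f x) /\ (forall x y, f (addV x y) = f x + f y).

Lemma farkas (R : realFieldType) (V : Type) (addV : V -> V -> V) (scaleV : R -> V -> V) p : forall (g : 'I_p -> V -> R) (c : V -> R),
  (forall i, linF addV scaleV (g i)) -> linF addV scaleV c ->
  (exists lam : 'I_p -> R, (forall i, 0 <= lam i) /\ forall x, c x = \sum_i lam i * g i x) \/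
  (exists x, (forall i, 0 <= g i x) /\ c x < 0).
Proof.
elim: p => [|p IH] g c Hg Hc.
  case: (classic (exists x, c x < 0)) => [[x Hx]|H].
    by right; exists x; split => // [[]].
  left; exists (fun _ => 0); split => // x; rewrite big_ord0.
  have h1 : forall y, 0 <= c y.
    by move=> y; rewrite leNgt; apply/negP => Hy; apply: H; exists y.
  have := h1 (scaleV (-1) x); rewrite Hc.1 mulN1r oppr_ge0 => h2.
  by apply/eqP; rewrite eq_le h2 h1.
pose am := g ord0; pose gr i := g (lift ord0 i).
have Hgr : forall i, linF addV scaleV (gr i) by move=> i; apply: Hg.
have Ham : linF addV scaleV am by apply: Hg.
case: (IH gr c Hgr Hc) => [[lam [Hl Hc']]|[x [Hx Hcx]]].
  left; exists (fun i => oapp lam 0 (unlift ord0 i)); split.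
    by move=> i; case: (unliftP ord0 i) => [j _|_] /=.
  move=> y; rewrite big_ord_recl unlift_none /= mul0r add0r Hc'.
  by apply: eq_bigr => i _; rewrite liftK.
case: (lerP 0 (am x)) => Hax.
  right; exists x; split => // i.
  by case: (unliftP ord0 i) => [j ->|->] //; apply: Hx.
have amx0 : am x != 0 by rewrite ltr0_neq0.
pose g' i y := gr i y - (gr i x / am x) * am y.
pose c' y := c y - (c x / am x) * am y.
have Hg' : forall i, linF addV scaleV (g' i).
  move=> i; have [H1 H2] := Hgr i; have [A1 A2] := Ham.
  split => [a y|y z]; rewrite /g' /=.
    rewrite H1 A1; ring.
  rewrite H2 A2; ring.
have Hc2 : linF addV scaleV c'.
  have [H1 H2] := Hc; have [A1 A2] := Ham.
  split => [a y|y z]; rewrite /c' /=.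
    rewrite H1 A1; ring.
  rewrite H2 A2; ring.
case: (IH g' c' Hg' Hc2) => [[lam [Hl Hc']]|[x' [Hx' Hcx']]].
  pose mu := (c x - \sum_i lam i * gr i x) / am x.
  have Hmu : 0 <= mu.
    rewrite /mu; apply: mulr_le0; last by rewrite invr_le0 ltW.
    rewrite subr_le0 (le_trans (ltW Hcx)) // sumr_ge0 // => i _.
    by rewrite mulr_ge0.
  left; exists (fun i => oapp lam mu (unlift ord0 i)); split.
    by move=> i; case: (unliftP ord0 i) => [j _|_] /=.
  move=> y; rewrite big_ord_recl unlift_none /=.
  have -> : \sum_(i < p) oapp lam mu (unlift ord0 (lift ord0 i)) * g (lift ord0 i) y
           = \sum_(i < p) lam i * gr i y by apply: eq_bigr => i _; rewrite liftK.
  have : c' y = \sum_i lam i * g' i y by [].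
  rewrite /c' /g' /mu.
  under eq_bigr => i _ do rewrite mulrBr.
  rewrite sumrB => E.
  have -> : c y = \sum_i lam i * gr i y - \sum_i lam i * (gr i x / am x * am y)
                  + c x / am x * am y by rewrite -E; ring.
  have -> : \sum_i lam i * (gr i x / am x * am y) = (\sum_i lam i * gr i x) / am x * am y.
    rewrite !mulr_suml; apply: eq_bigr => i _; ring.
  rewrite /am; field; exact: amx0.
right; exists (addV x' (scaleV (- (am x' / am x)) x)); split.
  move=> i; case: (unliftP ord0 i) => [j ->|->].
    have := Hx' j; rewrite /g' -/(gr j) (Hgr j).2 (Hgr j).1.
    suff -> : gr j x' + - (am x' / am x) * gr j x = gr j x' - gr j x / am x * am x' by [].
    ring.
  rewrite -/am Ham.2 Ham.1.
  suff -> : am x' + - (am x' / am x) * am x = 0 by [].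
  by field.
rewrite Hc.2 Hc.1.
suff -> : c x' + - (am x' / am x) * c x = c' x' by [].
rewrite /c'; ring.
Qed.

Lemma farkasT (R : realFieldType) (V : Type) (addV : V -> V -> V) (scaleV : R -> V -> V) (I : finType) (g : I -> V -> R) (c : V -> R) :
  (forall i, linF addV scaleV (g i)) -> linF addV scaleV c ->
  (forall x, (forall i, 0 <= g i x) -> 0 <= c x) ->
  exists lam : I -> R, (forall i, 0 <= lam i) /\ forall x, c x = \sum_i lam i * g i x.
Proof.
move=> Hg Hc H.
case: (@farkas R V addV scaleV #|I| (fun i => g (enum_val i)) c (fun i => Hg _) Hc) => [[lam [Hl E]]|[x [Hx Hcx]]].
  exists (fun j => lam (enum_rank j)); split => // x.
  rewrite E (big_enum_val (A := I)) /=.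
  by apply: eq_bigr => i _; rewrite enum_valK.
exfalso; have := H x.
have Hx2 : forall j, 0 <= g j x by move=> j; rewrite -(enum_rankK j).
by move=> /(_ Hx2); rewrite leNgt Hcx.
Qed.


Lemma diag_entry (R : realFieldType) p q (y : 'cV[R]_p) (A : 'M[R]_(p, q)) i j :
  (diag_mx y^T *m A) i j = y i 0 * A i j.
Proof. by rewrite mul_diag_mx !mxE. Qed.

Lemma diag_helper (R : realFieldType) p q (y : 'cV[R]_p) (M : imx R p q) (A' S : 'M[R]_(p,q)) :
  in_diag_imx y M A' ->
  (forall i, y i 0 != 0 -> forall j, S i j = (y i 0)^-1 * A' i j) ->
  (forall i, y i 0 = 0 -> forall j, imlo M i j <= S i j <= imhi M i j) ->
  A' = diag_mx y^T *m S /\ imem M S.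
Proof.
move=> [A [HA ->]] H1 H2; split.
  apply/matrixP => i j; rewrite !diag_entry.
  have [y0|ny0] := eqVneq (y i 0) 0; first by rewrite y0 !mul0r.
  by rewrite (H1 i ny0 j) diag_entry mulrA mulfV // mul1r.
move=> i j; have [y0|ny0] := eqVneq (y i 0) 0; first exact: H2.
by rewrite (H1 i ny0 j) diag_entry mulrA mulVf // mul1r.
Qed.

Lemma row_entry (R : realFieldType) p q (A : 'M[R]_(p,q)) (B : 'M[R]_(p,q)) c i :
  row i A = c *: row i B -> forall j, A i j = c * B i j.
Proof. by move=> E j; have := congr1 (fun M : 'rV[R]_q => M 0 j) E; rewrite !mxE. Qed.

Lemma eT_entry (R : realFieldType) p (u : 'cV[R]_p) : (eT u) 0 0 = \sum_i u i 0.
Proof. by rewrite /eT !mxE; apply: eq_bigr => i _; rewrite mxE mul1r. Qed.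

Lemma eT_mono (R : realFieldType) p (u v : 'cV[R]_p) : mx_le u v -> (eT u) 0 0 <= (eT v) 0 0.
Proof. by move=> H; rewrite !eT_entry; apply: ler_sum => i _; apply: H. Qed.

Lemma rowmul_entry (R : realFieldType) p q (A : 'M[R]_(p,q)) (x : 'cV[R]_q) i :
  (row i A *m x) 0 0 = (A *m x) i 0.
Proof. by rewrite -row_mul mxE. Qed.

Lemma nonneg_prod (R : realFieldType) q (w : 'rV[R]_q) (z : 'cV[R]_q) :
  (forall j, 0 <= w 0 j) -> mx_le 0 z -> 0 <= (w *m z) 0 0.
Proof.
move=> Hw Hz; rewrite mxE sumr_ge0 // => j _; rewrite mulr_ge0 //.
by have := Hz j 0; rewrite mxE.
Qed.

Lemma row_if (R : realFieldType) p q (G : 'I_p -> 'I_q -> R) (S : 'M[R]_(p,q)) i :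
  (forall j, G i j = S i j) -> row i (\matrix_(i0, j) G i0 j) = row i S.
Proof. by move=> h; apply/rowP => j; rewrite !mxE h. Qed.

Lemma witness_exists (R : realFieldType) k l m n (P : ILP R k l m n)
  (xf : 'cV[R]_m) (xn : 'cV[R]_n) Af' An' a' Bf' Bn' b' yf yn :
  weakly_feasible P xf xn ->
  exists s, witness_scen P xf xn Af' An' a' Bf' Bn' b' yf yn s.
Proof.
move=> [s0 [[H1 [H2 [H3 [H4 [H5 [H6 _]]]]]] [Ef Eb Exn]]].
exists (MkScen
  (\matrix_(i, j) if yf i 0 != 0 then (yf i 0)^-1 * Af' i j else sAf s0 i j)
  (\matrix_(i, j) if yf i 0 != 0 then (yf i 0)^-1 * An' i j else sAn s0 i j)
  (\matrix_(i, j) if 0 < yn i 0 then (yn i 0)^-1 * Bf' i j else sBf s0 i j)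
  (\matrix_(i, j) if 0 < yn i 0 then (yn i 0)^-1 * Bn' i j else sBn s0 i j)
  (\matrix_(i, j) if yf i 0 != 0 then (yf i 0)^-1 * a' i j else sa s0 i j)
  (\matrix_(i, j) if 0 < yn i 0 then (yn i 0)^-1 * b' i j else sb s0 i j)
  (eT Af' + eT Bf')^T
  (\col_i (if xn i 0 == 0 then imhi (Icn P) i 0 else (eT An' + eT Bn') 0 i))).
split => //=.
- move=> i; case: ifP => h.
    split; [by apply/rowP => j; rewrite !mxE h | by apply/rowP => j; rewrite !mxE h |].
    by rewrite mxE h.
  rewrite (@row_if _ _ _ (fun i0 j => if yf i0 0 != 0 then (yf i0 0)^-1 * Af' i0 j else sAf s0 i0 j) (sAf s0)); last by move=> j; rewrite h.
  rewrite (@row_if _ _ _ (fun i0 j => if yf i0 0 != 0 then (yf i0 0)^-1 * An' i0 j else sAn s0 i0 j) (sAn s0)); last by move=> j; rewrite h.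
  rewrite (@row_if _ _ _ (fun i0 j => if yf i0 0 != 0 then (yf i0 0)^-1 * a' i0 j else sa s0 i0 j) (sa s0)); last by move=> j; rewrite h.
  split.
  + by apply/rowP => j; rewrite (ord1 j) mxE !rowmul_entry [RHS]mxE -Ef [RHS]mxE.
  + by move=> j; rewrite mxE h; apply: H1.
  + by move=> j; rewrite mxE h; apply: H2.
  + by rewrite mxE h; apply: H5.
- move=> i; case: ifP => h.
    split; [by apply/rowP => j; rewrite !mxE h | by apply/rowP => j; rewrite !mxE h |].
    by rewrite mxE h.
  rewrite (@row_if _ _ _ (fun i0 j => if 0 < yn i0 0 then (yn i0 0)^-1 * Bf' i0 j else sBf s0 i0 j) (sBf s0)); last by move=> j; rewrite h.
  rewrite (@row_if _ _ _ (fun i0 j => if 0 < yn i0 0 then (yn i0 0)^-1 * Bn' i0 j else sBn s0 i0 j) (sBn s0)); last by move=> j; rewrite h.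
  split.
  + by rewrite [X in _ <= X]mxE !rowmul_entry [X in X <= _]mxE h; have := Eb i 0; rewrite [X in _ <= X]mxE.
  + by move=> j; rewrite mxE h; apply: H3.
  + by move=> j; rewrite mxE h; apply: H4.
  + by rewrite mxE h; apply: H6.
- by move=> i; rewrite mxE.
Qed.

Lemma witness_optimal (R : realFieldType) k l m n (P : ILP R k l m n)
  (xf : 'cV[R]_m) (xn : 'cV[R]_n) sigma Af' An' a' Bf' Bn' b' yf yn s :
  weakly_feasible P xf xn ->
  testing_system P xf xn sigma Af' An' a' Bf' Bn' b' yf yn ->
  witness_scen P xf xn Af' An' a' Bf' Bn' b' yf yn s ->
  in_Dp P s /\ lp_optimal s xf xn.
Proof.
move=> [s0 [_ [_ _ Exn]]] [[TAf TAn Ta] [[TBf TBn Tb] [EA [EB [Tcf Tcn1 Tcn0 Tyn Tsig]]]]].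
move=> [Wcf WA WB Wcn].
have hyn : forall i, 0 <= yn i 0 by move=> i; have := Tyn i 0; rewrite mxE.
have hpos : forall i, (0 < yn i 0) = (yn i 0 != 0) by move=> i; rewrite lt0r hyn andbT.
have [DAf IAf] : Af' = diag_mx yf^T *m sAf s /\ imem (IAf P) (sAf s).
  apply: diag_helper TAf _ _.
    by move=> i h j; have := WA i; rewrite h => -[r1 _ _]; exact: row_entry r1 j.
  by move=> i h j; have := WA i; rewrite h eqxx /= => -[_ r2 _ _]; exact: r2.
have [DAn IAn] : An' = diag_mx yf^T *m sAn s /\ imem (IAn P) (sAn s).
  apply: diag_helper TAn _ _.
    by move=> i h j; have := WA i; rewrite h => -[_ r1 _]; exact: row_entry r1 j.
  by move=> i h j; have := WA i; rewrite h eqxx /= => -[_ _ r2 _]; exact: r2.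
have [Da Ia] : a' = diag_mx yf^T *m sa s /\ imem (Ia P) (sa s).
  apply: diag_helper Ta _ _.
    by move=> i h j; have := WA i; rewrite h (ord1 j) => -[_ _ r1].
  by move=> i h j; have := WA i; rewrite h eqxx (ord1 j) /= => -[_ _ _ r2].
have [DBf IBf] : Bf' = diag_mx yn^T *m sBf s /\ imem (IBf P) (sBf s).
  apply: diag_helper TBf _ _.
    by move=> i h j; have := WB i; rewrite hpos h => -[r1 _ _]; exact: row_entry r1 j.
  by move=> i h j; have := WB i; rewrite hpos h eqxx /= => -[_ r2 _ _]; exact: r2.
have [DBn IBn] : Bn' = diag_mx yn^T *m sBn s /\ imem (IBn P) (sBn s).
  apply: diag_helper TBn _ _.
    by move=> i h j; have := WB i; rewrite hpos h => -[_ r1 _]; exact: row_entry r1 j.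
  by move=> i h j; have := WB i; rewrite hpos h eqxx /= => -[_ _ r2 _]; exact: r2.
have [Db Ib] : b' = diag_mx yn^T *m sb s /\ imem (Ib P) (sb s).
  apply: diag_helper Tb _ _.
    by move=> i h j; have := WB i; rewrite hpos h (ord1 j) => -[_ _ r1].
  by move=> i h j; have := WB i; rewrite hpos h eqxx (ord1 j) /= => -[_ _ _ r2].
have Icn : imem (Icn P) (scn s).
  move=> i j; rewrite (ord1 j) Wcn; case: eqP => h.
    by rewrite imlo_le_hi lexx.
  apply: Tcn1; rewrite lt_neqAle eq_sym; apply/andP; split; first exact/eqP.
  by have := Exn i 0; rewrite mxE.
have Dp : in_Dp P s by rewrite /in_Dp Wcf.
have FA : sAf s *m xf + sAn s *m xn = sa s.
  apply/matrixP => i j; rewrite (ord1 j).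
  have [h|h] := eqVneq (yf i 0) 0.
    have := WA i; rewrite h eqxx /= => -[r _ _ _].
    have := congr1 (fun M : 'rV_1 => M 0 0) r; rewrite mxE !rowmul_entry [RHS]mxE.
    by move=> <-; rewrite mxE.
  have : diag_mx yf^T *m (sAf s *m xf + sAn s *m xn) = diag_mx yf^T *m sa s.
    by rewrite mulmxDr !mulmxA -DAf -DAn -Da.
  move/(congr1 (fun M : 'cV_k => M i 0)); rewrite !diag_entry.
  exact: mulfI.
have FB : forall (z1 : 'cV[R]_m) (z2 : 'cV[R]_n), diag_mx yn^T *m (sBf s *m z1 + sBn s *m z2) = Bf' *m z1 + Bn' *m z2.
  by move=> z1 z2; rewrite mulmxDr !mulmxA -DBf -DBn.
have FBx : mx_le (sb s) (sBf s *m xf + sBn s *m xn).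
  move=> i j; rewrite (ord1 j).
  have [h|h] := eqVneq (yn i 0) 0.
    have := WB i; rewrite hpos h eqxx /= => -[r _ _ _].
    by move: r; rewrite mxE !rowmul_entry [X in _ -> _ <= X]mxE.
  have := congr1 (fun M : 'cV_l => M i 0) (FB xf xn); rewrite EB Db !diag_entry.
  by move/(mulfI h) ->.
have Hfeas : lp_feasible s xf xn by split.
split => //; split => // xf' xn' [EA' EB' Exn'].
pose C := eT Af' + eT Bf'; pose W := eT An' + eT Bn'.
have Key : forall (z1 : 'cV[R]_m) (z2 : 'cV[R]_n), C *m z1 + W *m z2 = eT (Af' *m z1 + An' *m z2) + eT (Bf' *m z1 + Bn' *m z2).
  move=> z1 z2; rewrite /C /W /eT !mulmxDr !mulmxDl !mulmxA.
  by rewrite addrACA.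
have Obj : forall (z1 : 'cV[R]_m) (z2 : 'cV[R]_n), lp_obj s z1 z2 = (C *m z1 + W *m z2) 0 0 + (((scn s)^T - W) *m z2) 0 0.
  move=> z1 z2; rewrite /lp_obj Wcf trmxK mulmxBl -/C.
  rewrite !mxE; ring.
have Wle : forall j, W 0 j <= (scn s) j 0.
  move=> j; rewrite Wcn; case: eqP => h; first exact: Tcn0.
  exact: lexx.
have Ox : lp_obj s xf xn = (eT a' + eT b') 0 0.
  rewrite Obj Key EA EB.
  suff -> : (((scn s)^T - W) *m xn) 0 0 = 0 by rewrite addr0.
  rewrite mxE big1 // => j _; rewrite !mxE Wcn.
  case: eqP => h; first by rewrite h mulr0.
  by rewrite !mxE subrr mul0r.
rewrite Ox Obj Key -[X in X <= _]addr0; apply: lerD; last first.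
  by apply: nonneg_prod => // j; have := Wle j; rewrite !mxE subr_ge0.
rewrite mxE [X in _ <= X]mxE; apply: lerD.
  rewrite DAf DAn -!mulmxA -mulmxDr EA' -Da; exact: lexx.
apply: eT_mono => i j; rewrite (ord1 j) -FB Db !diag_entry.
by apply: ler_wpM2l => //; apply: EB'.
Qed.
Definition V3 (R : realFieldType) m n := ('cV[R]_m * 'cV[R]_n * R)%type.
Definition addV3 (R : realFieldType) m n (u w : V3 R m n) : V3 R m n :=
  (u.1.1 + w.1.1, u.1.2 + w.1.2, u.2 + w.2).
Definition scaleV3 (R : realFieldType) m n (a : R) (u : V3 R m n) : V3 R m n :=
  (a *: u.1.1, a *: u.1.2, a * u.2).

Lemma linF_mx (R : realFieldType) m n p (M1 : 'M[R]_(p, m)) (M2 : 'M[R]_(p, n)) i j :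
  linF (@addV3 R m n) (@scaleV3 R m n) (fun d => (M1 *m d.1.1 + M2 *m d.1.2) i j).
Proof.
split => [a x|x y] /=.
  by rewrite -!scalemxAr -scalerDr mxE.
by rewrite !mulmxDr addrACA mxE.
Qed.

Lemma linF_ent (R : realFieldType) m n j :
  linF (@addV3 R m n) (@scaleV3 R m n) (fun d => d.1.2 j 0).
Proof. by split => [a x|x y] /=; rewrite mxE. Qed.

Lemma linF_t (R : realFieldType) m n r :
  linF (@addV3 R m n) (@scaleV3 R m n) (fun d => d.2 * r).
Proof. by split => [a x|x y] /=; rewrite ?mulrA ?mulrDl. Qed.

Lemma linF_t1 (R : realFieldType) m n :
  linF (@addV3 R m n) (@scaleV3 R m n) (fun d => d.2).
Proof. by split. Qed.

Lemma linF_add (R : realFieldType) V (ad : V -> V -> V) (sc : R -> V -> V) f g :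
  linF ad sc f -> linF ad sc g -> linF ad sc (fun d => f d + g d).
Proof.
move=> [f1 f2] [g1 g2]; split => [a x|x y].
  by rewrite f1 g1 mulrDr.
by rewrite f2 g2 addrACA.
Qed.

Lemma linF_opp (R : realFieldType) V (ad : V -> V -> V) (sc : R -> V -> V) f :
  linF ad sc f -> linF ad sc (fun d => - f d).
Proof. by move=> [f1 f2]; split => [a x|x y]; rewrite ?f1 ?f2 ?mulrN ?opprD. Qed.

Lemma sum_unit (R : realFieldType) (F : unit -> R) : \sum_(i : unit) F i = F tt.
Proof. by rewrite (big_pred1 tt) // => -[]. Qed.

Lemma eT_diag (R : realFieldType) p q (y : 'cV[R]_p) (S : 'M[R]_(p, q)) j :
  (eT (diag_mx y^T *m S)) 0 j = \sum_i y i 0 * S i j.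
Proof. by rewrite /eT mxE; apply: eq_bigr => i _; rewrite mxE mul1r diag_entry. Qed.

Lemma opt_dual (R : realFieldType) k l m n (P : ILP R k l m n)
  (xf : 'cV[R]_m) (xn : 'cV[R]_n) :
  weakly_optimal P xf xn ->
  exists sigma : 'cV[R]_k, sign_vec sigma /\
    exists Af' An' a' Bf' Bn' b' yf yn,
      testing_system P xf xn sigma Af' An' a' Bf' Bn' b' yf yn.
Proof.
move=> [s [Dp [[FA FB Fxn] Opt]]].
pose v := lp_obj s xf xn.
pose rA (i : 'I_k) (d : V3 R m n) := (sAf s *m d.1.1 + sAn s *m d.1.2) i 0 - d.2 * sa s i 0.
pose rB (i : 'I_l) (d : V3 R m n) := (sBf s *m d.1.1 + sBn s *m d.1.2) i 0 - d.2 * sb s i 0.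
pose gen (i : ('I_k + 'I_k + 'I_l + 'I_n + unit)%type) : V3 R m n -> R :=
  match i with
  | inl (inl (inl (inl i))) => rA i
  | inl (inl (inl (inr i))) => fun d => - rA i d
  | inl (inl (inr i)) => rB i
  | inl (inr j) => fun d => d.1.2 j 0
  | inr _ => fun d => d.2
  end.
pose cf (d : V3 R m n) := ((scf s)^T *m d.1.1 + (scn s)^T *m d.1.2) 0 0 - d.2 * v.
have Hg : forall i, linF (@addV3 R m n) (@scaleV3 R m n) (gen i).
  case=> [[[[i|i]|i]|j]|u] /=.
  - exact: (linF_add (linF_mx _ _ _ _) (linF_opp (linF_t _ _ _))).
  - exact: (linF_opp (linF_add (linF_mx _ _ _ _) (linF_opp (linF_t _ _ _)))).
  - exact: (linF_add (linF_mx _ _ _ _) (linF_opp (linF_t _ _ _))).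
  - exact: linF_ent.
  - exact: linF_t1.
have Hc : linF (@addV3 R m n) (@scaleV3 R m n) cf.
  exact: (linF_add (linF_mx _ _ _ _) (linF_opp (linF_t _ _ _))).
have Hcond : forall d, (forall i, 0 <= gen i d) -> 0 <= cf d.
  move=> [[df dn] t] H.
  have hA : forall i, rA i (df, dn, t) = 0.
    move=> i; have h1 := H (inl (inl (inl (inl i)))); have h2 := H (inl (inl (inl (inr i)))).
    by apply/eqP; rewrite eq_le -oppr_ge0 h1 h2.
  have hB : forall i, 0 <= rB i (df, dn, t) by move=> i; exact: (H (inl (inl (inr i)))).
  have hn : forall j, 0 <= dn j 0 by move=> j; exact: (H (inl (inr j))).
  have ht : 0 <= t by exact: (H (inr tt)).
  rewrite /cf /=.
  set S := ((scf s)^T *m df + (scn s)^T *m dn) 0 0.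
  have [t0|tn0] := eqVneq t 0.
    have Ad0 : sAf s *m df + sAn s *m dn = 0.
      apply/matrixP => i j; rewrite (ord1 j) [RHS]mxE.
      by have := hA i; rewrite /rA /= t0 mul0r subr0.
    have Fz : lp_feasible s (xf + df) (xn + dn).
      split.
      - by rewrite !mulmxDr addrACA FA Ad0 addr0.
      - move=> i j; rewrite (ord1 j) !mulmxDr addrACA [X in _ <= X]mxE.
        rewrite -[sb s i 0]addr0; apply: lerD; first exact: FB.
        by have := hB i; rewrite /rB /= t0 mul0r subr0.
      - move=> i j; rewrite (ord1 j) !mxE; apply: addr_ge0; last exact: hn.
        by have := Fxn i 0; rewrite mxE.
    have := Opt _ _ Fz.
    have -> : lp_obj s (xf + df) (xn + dn) = v + S.
      by rewrite /lp_obj /v /S !mulmxDr addrACA mxE.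
    by rewrite t0 mul0r subr0 lerDl.
  have tpos : 0 < t by rewrite lt_neqAle eq_sym tn0.
  have Ad : sAf s *m df + sAn s *m dn = t *: sa s.
    apply/matrixP => i j; rewrite (ord1 j) [RHS]mxE.
    by have := hA i; rewrite /rA /= => /eqP; rewrite subr_eq0 => /eqP.
  have Fz : lp_feasible s (t^-1 *: df) (t^-1 *: dn).
    split.
    - by rewrite -!scalemxAr -scalerDr Ad scalerA mulVf // scale1r.
    - move=> i j; rewrite (ord1 j) -!scalemxAr -scalerDr mxE.
      rewrite -[sb s i 0]mul1r -(mulVf tn0) -mulrA.
      apply: ler_wpM2l; first by rewrite invr_ge0 ltW.
      by have := hB i; rewrite /rB /= subr_ge0.
    - move=> i j; rewrite (ord1 j) !mxE; apply: mulr_ge0; first by rewrite invr_ge0 ltW.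
      exact: hn.
  have := Opt _ _ Fz.
  have -> : lp_obj s (t^-1 *: df) (t^-1 *: dn) = t^-1 * S.
    by rewrite /lp_obj /S -!scalemxAr -scalerDr mxE.
  move=> Hv; rewrite subr_ge0.
  have := ler_wpM2l (ltW tpos) Hv; rewrite mulrA mulfV // mul1r.
  by rewrite /v.
have [lam [Hlam E]] := farkasT Hg Hc Hcond.
pose yf : 'cV[R]_k := \col_i (lam (inl (inl (inl (inl i)))) - lam (inl (inl (inl (inr i))))).
pose yn : 'cV[R]_l := \col_i lam (inl (inl (inr i))).
pose nu j := lam (inl (inr j)).
pose lt := lam (inr tt).
have Ex : forall d, cf d = \sum_i yf i 0 * rA i d + \sum_i yn i 0 * rB i d
                          + \sum_j nu j * d.1.2 j 0 + lt * d.2.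
  move=> d; rewrite E !big_sumType sum_unit /= -big_split /=.
  congr (_ + _ + _ + _).
  - by apply: eq_bigr => i _; rewrite mxE; ring.
  - by apply: eq_bigr => i _; rewrite mxE.
have hyn : forall i, 0 <= yn i 0 by move=> i; rewrite mxE Hlam.
have [slB slN] : (forall i, yn i 0 * rB i (xf, xn, 1) = 0) /\ (forall j, nu j * xn j 0 = 0).
  have := Ex (xf, xn, 1).
  have -> : cf (xf, xn, 1) = 0 by rewrite /cf /= mul1r /v /lp_obj subrr.
  rewrite big1 ?add0r => [|i _]; last by rewrite /rA /= FA mul1r subrr mulr0.
  rewrite /= mulr1.
  have hrB : forall i, 0 <= rB i (xf, xn, 1).
    by move=> i; rewrite /rB /= mul1r subr_ge0; exact: FB.
  have hxn : forall j, 0 <= xn j 0 by move=> j; have := Fxn j 0; rewrite mxE.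
  have S1p : 0 <= \sum_i yn i 0 * rB i (xf, xn, 1).
    by apply: sumr_ge0 => i _; apply: mulr_ge0.
  have S2p : 0 <= \sum_j nu j * xn j 0.
    by apply: sumr_ge0 => j _; apply: mulr_ge0; [exact: Hlam|].
  have ltp : 0 <= lt by exact: Hlam.
  move/esym/eqP; rewrite paddr_eq0 ?addr_ge0 // => /andP[]; rewrite paddr_eq0 //.
  move=> /andP[/eqP h1 /eqP h2] _; split.
    by move=> i; apply: (psumr_eq0P _ h1) => // j _; apply: mulr_ge0.
  by move=> j; apply: (psumr_eq0P _ h2) => // j' _; apply: mulr_ge0; [exact: Hlam|].
have Ecf : forall j, scf s j 0 = \sum_i yf i 0 * sAf s i j + \sum_i yn i 0 * sBf s i j.
  move=> j; have := Ex (delta_mx j 0, 0, 0).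
  rewrite /cf /rA /rB /= !mulmx0 !addr0 !mul0r !subr0 -!colE.
  have -> : \sum_j0 nu j0 * (0 : 'cV[R]_n) j0 0 = 0 by rewrite big1 // => j0 _; rewrite mxE mulr0.
  rewrite mulr0 !addr0 !mxE => ->.
  by congr (_ + _); apply: eq_bigr => i _; rewrite [col _ _ _ _]mxE mul0r subr0.
have Ecn : forall j, scn s j 0 = \sum_i yf i 0 * sAn s i j + \sum_i yn i 0 * sBn s i j + nu j.
  move=> j; have := Ex (0, delta_mx j 0, 0).
  rewrite /cf /rA /rB /= !mulmx0 !add0r !mul0r !subr0 -!colE.
  rewrite (bigD1 j) //=.
  have -> : \sum_(i0 : 'I_n | i0 != j) nu i0 * (delta_mx j 0 : 'cV[R]_n) i0 0 = 0.
    by rewrite big1 // => j0 /negbTE h; rewrite mxE h mulr0.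
  have -> : col j (scn s)^T 0 0 = scn s j 0 by rewrite !mxE.
  rewrite [delta_mx _ _ _ _]mxE !eqxx /= mulr1 mulr0 !addr0 => ->.
  by congr (_ + _ + _); apply: eq_bigr => i _; rewrite [col _ _ _ _]mxE mul0r subr0.
have HW : forall q (S1 : 'M[R]_(k, q)) (S2 : 'M[R]_(l, q)) j,
    (eT (diag_mx yf^T *m S1) + eT (diag_mx yn^T *m S2)) 0 j
    = \sum_i yf i 0 * S1 i j + \sum_i yn i 0 * S2 i j.
  by move=> q S1 S2 j; rewrite mxE !eT_diag.
move: Dp => [D1 [D2 [D3 [D4 [D5 [D6 [D7 D8]]]]]]].
exists (\col_i (if 0 <= yf i 0 then 1 else -1)); split.
  by move=> i; rewrite mxE; case: ifP => _; [left|right].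
exists (diag_mx yf^T *m sAf s), (diag_mx yf^T *m sAn s), (diag_mx yf^T *m sa s).
exists (diag_mx yn^T *m sBf s), (diag_mx yn^T *m sBn s), (diag_mx yn^T *m sb s), yf, yn.
split; first by split; [exists (sAf s) | exists (sAn s) | exists (sa s)].
split; first by split; [exists (sBf s) | exists (sBn s) | exists (sb s)].
split; first by rewrite -!mulmxA -mulmxDr FA.
split.
  apply/matrixP => i j; rewrite (ord1 j) -!mulmxA -mulmxDr !diag_entry.
  have := slB i; rewrite /rB /= mul1r mulrBr => /eqP; rewrite subr_eq0 => /eqP.
  by [].
split.
- have -> : (eT (diag_mx yf^T *m sAf s) + eT (diag_mx yn^T *m sBf s))^T = scf s.
    by apply/matrixP => j z; rewrite (ord1 z) mxE HW Ecf.
  exact: D7.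
- move=> i hi; rewrite HW.
  have := slN i; move/eqP; rewrite mulf_eq0 (gt_eqF hi) orbF => /eqP nu0.
  by have := D8 i 0; rewrite Ecn nu0 addr0.
- move=> i _; rewrite HW.
  have /andP[_ h2] := D8 i 0; apply: le_trans h2.
  by rewrite Ecn lerDl; exact: Hlam.
- by move=> i j; rewrite (ord1 j) !mxE; exact: Hlam.
- move=> i j; rewrite (ord1 j) diag_entry [X in X <= _]mxE mxE.
  case: ifP => h; first by rewrite mul1r.
  by rewrite mulN1r oppr_ge0 ltW // ltNge h.
Qed.


Unset Implicit Arguments.

Theorem mainTheorem4 (R : realFieldType) (k l m n : nat) (P : ILP R k l m n)
  (xf : 'cV[R]_m) (xn : 'cV[R]_n) :
  (weakly_optimal P xf xn <->
     weakly_feasible P xf xn /\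
     exists sigma : 'cV[R]_k, sign_vec sigma /\
       exists Af' An' a' Bf' Bn' b' yf yn,
         testing_system P xf xn sigma Af' An' a' Bf' Bn' b' yf yn) /\
  (forall (sigma : 'cV[R]_k) Af' An' a' Bf' Bn' b' yf yn,
     weakly_feasible P xf xn -> sign_vec sigma ->
     testing_system P xf xn sigma Af' An' a' Bf' Bn' b' yf yn ->
     (exists s, witness_scen P xf xn Af' An' a' Bf' Bn' b' yf yn s) /\
     (forall s, witness_scen P xf xn Af' An' a' Bf' Bn' b' yf yn s ->
        in_Dp P s /\ lp_optimal s xf xn)).
Proof.
split.
  split.
    move=> Hopt; split; last exact: opt_dual.
    by case: Hopt => s [D [F _]]; exists s.
  move=> [Hwf [sigma [Hs [Af' [An' [a' [Bf' [Bn' [b' [yf [yn T]]]]]]]]]]].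
  have [s Ws] : exists s, witness_scen P xf xn Af' An' a' Bf' Bn' b' yf yn s.
    exact: witness_exists.
  by exists s; exact: (witness_optimal Hwf T Ws).
move=> sigma Af' An' a' Bf' Bn' b' yf yn Hwf Hs T; split.
  exact: witness_exists.
by move=> s Ws; exact: (witness_optimal Hwf T Ws).
Qed.
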